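(* Let $\mathcal{L}$ be a compendious logic. Every non-finitary theory $K$ of $\mathcal{L}$ contains a cleaving, i.e., there is a cleaving $\mathcal{C}\subseteq K$.
   Context: A logic $(\mathrm{Fm},\mathrm{Cn})$ (countable $\mathrm{Fm}$) is compendious if it is Tarskian ($\mathrm{Cn}$ monotone, extensive, idempotent), Boolean (has $\neg,\lor$ with $\mathrm{Cn}(\{\varphi\})\cap\mathrm{Cn}(\{\neg\varphi\})=\mathrm{Cn}(\emptyset)$, $\mathrm{Cn}(\{\varphi,\neg\varphi\})=\mathrm{Fm}$, and the usual introduction and elimination rules for $\lor$ relative to $\mathrm{Cn}$), has infinitely many theories ($K=\mathrm{Cn}(K)$), and satisfies (Discerning): for all sets $X,Y$ of complete consistent theories, $\bigcap X=\bigcap Y$ implies $X=Y$. $\varphi\equiv\psi$ iff $\mathrm{Cn}(\{\varphi\})=\mathrm{Cn}(\{\psi\})$. A theory is non-finitary if it contains infinitely many $\equiv$-classes. A cleaving is an infinite set of formulae $\mathcal{C}$ such that for all distinct $\varphi,\psi\in\mathcal{C}$: (CL1) $\varphi\not\equiv\psi$, and (CL2) $\varphi\lor\psi\in\mathrm{Cn}(\emptyset)$. *)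

(* Defs.v *)
From Stdlib Require Import List.

Definition set (A : Type) := A -> Prop.

Definition subset {A} (X Y : set A) : Prop := forall a, X a -> Y a.
Definition seteq {A} (X Y : set A) : Prop := forall a, X a <-> Y a.
Definition single {A} (a : A) : set A := fun x => x = a.
Definition pair {A} (a b : A) : set A := fun x => x = a \/ x = b.
Definition union {A} (X Y : set A) : set A := fun x => X x \/ Y x.
Definition emptyset {A} : set A := fun _ => False.
Definition fullset {A} : set A := fun _ => True.

Definition infinite_set {A} (X : set A) : Prop :=
  forall l : list A, exists a, X a /\ ~ In a l.

Section Logic.
Variable Fm : Type.
Variable Cn : set Fm -> set Fm.

Definition countable_type : Prop :=
  exists f : Fm -> nat, forall x y, f x = f y -> x = y.

Definition tarskian : Prop :=
  (forall X Y, subset X Y -> subset (Cn X) (Cn Y)) /\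
  (forall X, subset X (Cn X)) /\
  (forall X, seteq (Cn (Cn X)) (Cn X)).

Definition is_theory (K : set Fm) : Prop := seteq K (Cn K).

Definition boolean (neg : Fm -> Fm) (disj : Fm -> Fm -> Fm) : Prop :=
  (forall phi, seteq (fun x => Cn (single phi) x /\ Cn (single (neg phi)) x)
                     (Cn emptyset)) /\
  (forall phi, seteq (Cn (pair phi (neg phi))) fullset) /\
  (forall phi psi, Cn (single phi) (disj phi psi)) /\
  (forall phi psi, Cn (single psi) (disj phi psi)) /\
  (forall X phi psi chi,
      Cn (union X (single phi)) chi ->
      Cn (union X (single psi)) chi ->
      Cn (union X (single (disj phi psi))) chi).

Definition infinitely_many_theories : Prop :=
  forall l : list (set Fm), exists K, is_theory K /\
    forall X, In X l -> ~ seteq K X.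

Definition complete_consistent_theory (neg : Fm -> Fm) (K : set Fm) : Prop :=
  is_theory K /\ (forall phi, K phi \/ K (neg phi)) /\ ~ seteq K fullset.

(* Intersection of a set of sets (the intersection of the empty family is Fm). *)
Definition bigcap (X : set (set Fm)) : set Fm := fun phi => forall T, X T -> T phi.

Definition familyeq (X Y : set (set Fm)) : Prop :=
  (forall T, X T -> exists T', Y T' /\ seteq T T') /\
  (forall T, Y T -> exists T', X T' /\ seteq T T').

Definition discerning (neg : Fm -> Fm) : Prop :=
  forall X Y : set (set Fm),
    (forall T, X T -> complete_consistent_theory neg T) ->
    (forall T, Y T -> complete_consistent_theory neg T) ->
    seteq (bigcap X) (bigcap Y) -> familyeq X Y.

Definition compendious (neg : Fm -> Fm) (disj : Fm -> Fm -> Fm) : Prop :=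
  countable_type /\ tarskian /\ boolean neg disj /\
  infinitely_many_theories /\ discerning neg.

Definition fequiv (phi psi : Fm) : Prop := seteq (Cn (single phi)) (Cn (single psi)).

Definition non_finitary (K : set Fm) : Prop :=
  forall l : list Fm, exists phi, K phi /\ forall psi, In psi l -> ~ fequiv phi psi.

Definition cleaving (disj : Fm -> Fm -> Fm) (C : set Fm) : Prop :=
  infinite_set C /\
  forall phi psi, C phi -> C psi -> phi <> psi ->
    ~ fequiv phi psi /\ Cn emptyset (disj phi psi).

End Logic.

(* Main.v *)
Require Import Defs.
From Stdlib Require Import List Classical ClassicalEpsilon Arith Lia FinFun.
Import ListNotations.

Section Work.
Variable Fm : Type.
Variable Cn : set Fm -> set Fm.
Variable neg : Fm -> Fm.
Variable disj : Fm -> Fm -> Fm.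
Hypothesis mono : forall X Y, subset X Y -> subset (Cn X) (Cn Y).
Hypothesis ext : forall X, subset X (Cn X).
Hypothesis idem : forall X, seteq (Cn (Cn X)) (Cn X).
Hypothesis expl : forall phi, seteq (Cn (pair phi (neg phi))) fullset.
Hypothesis di1 : forall phi psi, Cn (single phi) (disj phi psi).
Hypothesis di2 : forall phi psi, Cn (single psi) (disj phi psi).
Hypothesis delim : forall X phi psi chi,
      Cn (union X (single phi)) chi ->
      Cn (union X (single psi)) chi ->
      Cn (union X (single (disj phi psi))) chi.
Hypothesis EM : forall a, Cn emptyset (disj a (neg a)).

Definition D (l : list Fm) (c : Fm) := Cn (fun x => In x l) c.

Lemma Cn_sub X Y c : (forall x, X x -> Cn Y x) -> Cn X c -> Cn Y c.
Proof. intros H Hc. apply (proj1 (idem Y c)). exact (mono X (Cn Y) H c Hc). Qed.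

Lemma D_in l c : In c l -> D l c.
Proof. intro H. apply ext. exact H. Qed.

Lemma D_weak l l' c : (forall x, In x l -> In x l') -> D l c -> D l' c.
Proof. intros H. apply mono. exact H. Qed.

Lemma D_cut l a c : D l a -> D (a::l) c -> D l c.
Proof.
  intros Ha Hc. eapply Cn_sub; [|exact Hc]. intros x [<-|Hx]; auto. apply ext; exact Hx.
Qed.

Lemma D_cases l a b c : D l (disj a b) -> D (a::l) c -> D (b::l) c -> D l c.
Proof.
  intros Hd Ha Hb.
  assert (H : Cn (union (fun x => In x l) (single (disj a b))) c).
  { apply delim.
    - eapply mono; [|exact Ha]. intros x [<-|Hx]; [right; reflexivity|left; exact Hx].
    - eapply mono; [|exact Hb]. intros x [<-|Hx]; [right; reflexivity|left; exact Hx]. }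
  eapply Cn_sub; [|exact H]. intros x [Hx|Hx].
  - apply ext; exact Hx.
  - unfold single in Hx; subst; exact Hd.
Qed.

Lemma D_expl l a c : D l a -> D l (neg a) -> D l c.
Proof.
  intros Ha Hn. assert (H : Cn (pair a (neg a)) c) by (apply (proj2 (expl a c)); exact I).
  eapply Cn_sub; [|exact H]. intros x [->| ->]; auto.
Qed.

Lemma D_top l t : Cn emptyset t -> D l t.
Proof. apply mono. intros x []. Qed.

Lemma top_D t : D [] t -> Cn emptyset t.
Proof. apply mono. intros x []. Qed.

Lemma D_di1 l a b : D l a -> D l (disj a b).
Proof.
  intros Ha. apply D_cut with a; auto. eapply mono; [|apply di1].
  intros x Hx; unfold single in Hx; subst; left; auto.
Qed.

Lemma D_di2 l a b : D l b -> D l (disj a b).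
Proof.
  intros Ha. apply D_cut with b; auto. eapply mono; [|apply di2].
  intros x Hx; unfold single in Hx; subst; left; auto.
Qed.

Lemma D_trans1 l a b : D l a -> D [a] b -> D l b.
Proof.
  intros Ha Hb. apply D_cut with a; auto. eapply D_weak; [|exact Hb].
  intros x [<-|[]]; left; auto.
Qed.

Lemma fequiv_D a b : fequiv Fm Cn a b -> D [a] b.
Proof.
  intros H. assert (Cn (single a) b) by (apply (proj2 (H b)); apply ext; reflexivity).
  eapply mono; [|exact H0]. intros x Hx; unfold single in Hx; subst; left; auto.
Qed.

Lemma D_fequiv a b : D [a] b -> D [b] a -> fequiv Fm Cn a b.
Proof.
  intros Hab Hba x; split; intro Hx.
  - eapply Cn_sub; [|exact Hx]. intros y Hy; unfold single in Hy; subst.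
    eapply mono; [|exact Hba]. intros z [<-|[]]; reflexivity.
  - eapply Cn_sub; [|exact Hx]. intros y Hy; unfold single in Hy; subst.
    eapply mono; [|exact Hab]. intros z [<-|[]]; reflexivity.
Qed.

Lemma fequiv_refl a : fequiv Fm Cn a a.
Proof. intro x; tauto. Qed.
Lemma fequiv_sym a b : fequiv Fm Cn a b -> fequiv Fm Cn b a.
Proof. intros H x; specialize (H x); tauto. Qed.
Lemma fequiv_trans a b c : fequiv Fm Cn a b -> fequiv Fm Cn b c -> fequiv Fm Cn a c.
Proof. intros H1 H2 x; specialize (H1 x); specialize (H2 x); tauto. Qed.

Definition top t := Cn emptyset t.
Definition upcl (G : set Fm) := forall x y, G x -> D [x] y -> G y.
Definition inf G := non_finitary Fm Cn G.
Definition up e : set Fm := fun x => D [e] x.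
Definition inter (G H : set Fm) : set Fm := fun x => G x /\ H x.

Lemma inf_mono G H : (forall x, G x -> H x) -> inf G -> inf H.
Proof. intros GH Hi l. destruct (Hi l) as [x [Hx Hl]]; exists x; auto. Qed.

Lemma upcl_inter G e : upcl G -> upcl (inter G (up e)).
Proof.
  intros HG x y [Gx Ux] Dxy. split. eapply HG; eauto. eapply D_trans1; eauto.
Qed.

Lemma inj x y e : fequiv Fm Cn (disj x e) (disj y e) ->
  fequiv Fm Cn (disj x (neg e)) (disj y (neg e)) -> D [x] y.
Proof.
  intros F1 F2.
  assert (A1: D [x] (disj y e)).
  { apply D_trans1 with (disj x e). apply D_di1, D_in; simpl; auto. apply fequiv_D; auto. }
  assert (A2: D [x] (disj y (neg e))).
  { apply D_trans1 with (disj x (neg e)). apply D_di1, D_in; simpl; auto. apply fequiv_D; auto. }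
  apply D_cases with y e; [exact A1| apply D_in; simpl; auto|].
  apply D_cases with y (neg e).
  - apply D_weak with [x]; [intros z Hz; simpl in *; tauto | exact A2].
  - apply D_in; simpl; auto.
  - apply D_expl with e; apply D_in; simpl; auto.
Qed.

Lemma split G e : upcl G -> inf G -> inf (inter G (up e)) \/ inf (inter G (up (neg e))).
Proof.
  intros HG Hi. apply NNPP; intro Hn. apply not_or_and in Hn as [H1 H2].
  unfold inf, non_finitary in H1, H2.
  apply not_all_ex_not in H1 as [l1 H1]. apply not_all_ex_not in H2 as [l2 H2].
  assert (C1: forall x, inter G (up e) x -> exists u, In u l1 /\ fequiv Fm Cn x u).
  { intros x Hx. apply NNPP; intro N. apply H1. exists x. split; auto.
    intros psi Hp Hf. apply N; eauto. }
  assert (C2: forall x, inter G (up (neg e)) x -> exists u, In u l2 /\ fequiv Fm Cn x u).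
  { intros x Hx. apply NNPP; intro N. apply H2. exists x. split; auto.
    intros psi Hp Hf. apply N; eauto. }
  pose (i := inhabits e).
  pose (Q := fun (p : Fm * Fm) x => G x /\ fequiv Fm Cn (disj x e) (fst p)
                 /\ fequiv Fm Cn (disj x (neg e)) (snd p)).
  pose (f := fun p : Fm*Fm => epsilon i (Q p)).
  destruct (Hi (map f (list_prod l1 l2))) as [x [Gx Hx]].
  destruct (C1 (disj x e)) as [u [Hu Fu]].
  { split. eapply HG; [exact Gx| apply D_di1, D_in; simpl; auto]. apply D_di2, D_in; simpl; auto. }
  destruct (C2 (disj x (neg e))) as [v [Hv Fv]].
  { split. eapply HG; [exact Gx| apply D_di1, D_in; simpl; auto]. apply D_di2, D_in; simpl; auto. }
  assert (Hs: Q (u,v) (f (u,v))).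
  { apply (epsilon_spec i (Q (u,v))). exists x. unfold Q; simpl; auto. }
  apply (Hx (f (u,v))). apply in_map, in_prod; auto.
  destruct Hs as [_ [Hs1 Hs2]]. simpl in Hs1, Hs2.
  apply D_fequiv.
  - apply inj with e.
    + eapply fequiv_trans; [exact Fu| apply fequiv_sym; exact Hs1].
    + eapply fequiv_trans; [exact Fv| apply fequiv_sym; exact Hs2].
  - apply inj with e.
    + eapply fequiv_trans; [exact Hs1| apply fequiv_sym; exact Fu].
    + eapply fequiv_trans; [exact Hs2| apply fequiv_sym; exact Fv].
Qed.

Lemma step G : upcl G -> inf G -> exists a, G a /\ ~ top a /\ inf (inter G (up (neg a))).
Proof.
  intros HG Hi.
  destruct (Hi nil) as [x0 [Gx0 _]].
  set (t := disj x0 (neg x0)). assert (Tt: top t) by apply EM.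
  assert (Ntop: forall z, ~ fequiv Fm Cn z t -> ~ top z).
  { intros z Hz Tz. apply Hz, D_fequiv; apply D_top; auto. }
  destruct (Hi [t]) as [e [Ge He]].
  assert (Ne: ~ top e) by (apply Ntop, He; simpl; auto).
  destruct (classic (inf (inter G (up (neg e))))) as [Hc|Hc]. { exists e; auto. }
  assert (Hie: inf (inter G (up e))) by (destruct (split G e HG Hi); tauto).
  destruct (Hie [e; t]) as [e' [[Ge' Ue'] He']].
  assert (N1: ~ fequiv Fm Cn e' e) by (apply He'; simpl; auto).
  assert (N2: ~ top e') by (apply Ntop, He'; simpl; auto).
  destruct (split (inter G (up e)) e' (upcl_inter G e HG) Hie) as [H|H].
  - exists (disj e (neg e')). split; [|split].
    + eapply HG; [exact Ge|]. apply D_di1, D_in; simpl; auto.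
    + intro T. apply N1, D_fequiv; [|exact Ue'].
      apply D_cases with e (neg e'); [apply D_top; exact T| apply D_in; simpl; auto|].
      apply D_expl with e'; apply D_in; simpl; auto.
    + eapply inf_mono; [|exact H]. intros x [[Gx _] Ux]. split; auto.
      eapply D_trans1; [|exact Ux].
      apply D_cases with e' (neg e'); [apply D_top, EM| apply D_in; simpl; auto|].
      apply D_expl with (disj e (neg e')); [apply D_di2, D_in; simpl; auto| apply D_in; simpl; auto].
  - exists e'. split; [|split]; auto. eapply inf_mono; [|exact H]. intros x [[Gx _] Ux]; split; auto.
Qed.

Lemma cleave K : upcl K -> inf K -> exists C, cleaving Fm Cn disj C /\ subset C K.
Proof.
  intros HK Hi. destruct (Hi nil) as [x0 _].
  pose (P := fun (G : set Fm) a => G a /\ ~ top a /\ inf (inter G (up (neg a)))).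
  pose (Sel := fun G => epsilon (inhabits x0) (P G)).
  pose (F := fun G => inter G (up (neg (Sel G)))).
  pose (Gs := fun n => Nat.iter n F K).
  pose (a := fun n => Sel (Gs n)).
  assert (Inv: forall n, upcl (Gs n) /\ inf (Gs n)).
  { induction n. simpl; auto. destruct IHn as [U I].
    assert (Pn: P (Gs n) (Sel (Gs n))) by (apply epsilon_spec; apply step; auto).
    change (Gs (S n)) with (F (Gs n)). split. apply upcl_inter; auto.
    destruct Pn as [_ [_ I']]. exact I'. }
  assert (Pa: forall n, P (Gs n) (a n)).
  { intro n; destruct (Inv n); apply epsilon_spec, step; auto. }
  assert (Mon: forall k m x, Gs (k + m) x -> Gs m x).
  { induction k; simpl; intros m x H; auto. apply IHk.
    change (F (Gs (k+m)) x) in H. destruct H as [H _]. exact H. }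
  assert (InK: forall n x, Gs n x -> K x).
  { intros n x H. apply (Mon n 0). rewrite Nat.add_0_r. exact H. }
  assert (Up: forall n m, n < m -> D [neg (a n)] (a m)).
  { intros n m Hnm. destruct (Pa m) as [Gm _].
    assert (Gm2: Gs ((m - S n) + S n) (a m)) by (replace ((m - S n) + S n) with m by lia; exact Gm).
    apply Mon in Gm2. clear Gm. rename Gm2 into Gm.
    change (F (Gs n) (a m)) in Gm. exact (proj2 Gm). }
  assert (Ntop: forall n, ~ top (a n)) by (intro n; destruct (Pa n) as [_ [T _]]; exact T).
  assert (Key: forall n m, n < m -> ~ fequiv Fm Cn (a n) (a m) /\ top (disj (a n) (a m))).
  { intros n m Hnm. split.
    - intro Hf. apply (Ntop n). apply top_D.
      apply D_cases with (a n) (neg (a n)); [apply D_top, EM | apply D_in; simpl; auto |].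
      apply D_trans1 with (a m). apply Up; auto. apply fequiv_D, fequiv_sym; auto.
    - apply top_D. apply D_cases with (a n) (neg (a n));
        [apply D_top, EM| apply D_di1, D_in; simpl; auto| apply D_di2, Up; auto]. }
  assert (Key2: forall n m, n <> m -> ~ fequiv Fm Cn (a n) (a m) /\ top (disj (a n) (a m))).
  { intros n m Hnm. destruct (Nat.lt_gt_cases n m) as [[H|H] _]; auto.
    destruct (Key m n H) as [K1 _]. split.
    - intro Hf; apply K1, fequiv_sym; auto.
    - apply top_D. apply D_cases with (a m) (neg (a m));
        [apply D_top, EM| apply D_di2, D_in; simpl; auto| apply D_di1, Up; auto]. }
  exists (fun x => exists n, x = a n). split.
  - split.
    + intro l. apply NNPP; intro N.
      assert (All: forall i, In (a i) l).
      { intro i. apply NNPP; intro Ni. apply N. exists (a i). split; eauto. }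
      assert (Inj: forall i j, a i = a j -> i = j).
      { intros i j E. destruct (Nat.eq_dec i j); auto. exfalso.
        destruct (Key2 i j n) as [Hf _]. apply Hf. rewrite E. apply fequiv_refl. }
      assert (ND: NoDup (map a (seq 0 (S (length l))))).
      { apply Injective_map_NoDup. exact Inj. apply seq_NoDup. }
      apply NoDup_incl_length with (l' := l) in ND.
      * rewrite length_map, length_seq in ND. lia.
      * intros z Hz. apply in_map_iff in Hz as [i [<- _]]. apply All.
    + intros phi psi [n ->] [m ->] Hne. assert (n <> m) by (intro; subst; auto).
      apply Key2; auto.
  - intros x [n ->]. destruct (Pa n) as [G _]. eapply InK; eauto.
Qed.

End Work.

Theorem mainTheorem6 (Fm : Type) (Cn : set Fm -> set Fm)
  (neg : Fm -> Fm) (disj : Fm -> Fm -> Fm) :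
  compendious Fm Cn neg disj ->
  forall K : set Fm, is_theory Fm Cn K -> non_finitary Fm Cn K ->
  exists C : set Fm, cleaving Fm Cn disj C /\ subset C K.
Proof.
  intros [_ [[mono [ext idem]] [[bot [expl [di1 [di2 delim]]]] _]]] K HK Hnf.
  assert (EM : forall a, Cn emptyset (disj a (neg a))).
  { intro a. apply (proj1 (bot a _)). split; [apply di1|apply di2]. }
  apply (cleave Fm Cn neg disj mono ext idem expl di1 di2 delim EM); auto.
  intros x y Kx Dxy. apply (proj2 (HK y)).
  eapply mono; [|exact Dxy]. intros z [<-|[]]; exact Kx.
Qed.
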